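(* (a) Let $(A,\circ)$ be an anti-pre-Lie algebra with sub-adjacent Lie algebra $(A,[-,-])$. Define a bilinear form $\mathcal B$ on $A\oplus A^*$ by $\mathcal B(x+a^*,y+b^* )=\langle x,b^*\rangle+\langle a^*,y\rangle$ for $x,y\in A$, $a^*,b^*\in A^*$. Then $\mathcal B$ is a nondegenerate commutative 2-cocycle on the semi-direct product Lie algebra $A\ltimes_{-\mathcal L^*_\circ}A^*$. (b) Conversely, let $(\mathfrak g,[-,-])$ be a Lie algebra and $(\rho,\mathfrak g^* )$ a representation of it on $\mathfrak g^*$. Suppose that the bilinear form $\mathcal B(x+a^*,y+b^* )=\langle x,b^*\rangle+\langle a^*,y\rangle$ on $\mathfrak g\oplus\mathfrak g^*$ is a commutative 2-cocycle on $\mathfrak g\ltimes_\rho\mathfrak g^*$. Then there is a compatible anti-pre-Lie algebra structure $(\mathfrak g,\circ)$ on $(\mathfrak g,[-,-])$ (i.e. $(\mathfrak g,\circ)$ is anti-pre-Lie and $x\circ y-y\circ x=[x,y]$) such that $\rho=-\mathcal L^*_\circ$.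
   Context: All vector spaces are finite-dimensional over a field $\mathbb F$ of characteristic $0$. An anti-pre-Lie algebra is a vector space $A$ with a bilinear operation $\circ$ such that, writing $[x,y]=x\circ y-y\circ x$, for all $x,y,z\in A$: (i) $x\circ(y\circ z)-y\circ(x\circ z)=[y,x]\circ z$, and (ii) $[x,y]\circ z+[y,z]\circ x+[z,x]\circ y=0$; $(A,[-,-])$ is then a Lie algebra (the sub-adjacent Lie algebra). $-\mathcal L^*_\circ$ denotes the dual of the representation $-\mathcal L_\circ$ ($\mathcal L_\circ(x)y=x\circ y$), i.e. $\langle -\mathcal L^*_\circ(x)a^*,y\rangle=\langle a^*,x\circ y\rangle$. For a representation $(\rho,V)$ of a Lie algebra $\mathfrak g$, the semi-direct product $\mathfrak g\ltimes_\rho V$ is $\mathfrak g\oplus V$ with bracket $[x+u,y+v]=[x,y]+\rho(x)v-\rho(y)u$. A commutative 2-cocycle on a Lie algebra is a symmetric bilinear form $\mathcal B$ with $\mathcal B([x,y],z)+\mathcal B([y,z],x)+\mathcal B([z,x],y)=0$. *)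

(* Defs.v *)
From HB Require Import structures.
From mathcomp Require Import all_boot all_order all_algebra.
Set Implicit Arguments. Unset Strict Implicit. Unset Printing Implicit Defensive.
Import GRing.Theory.
Local Open Scope ring_scope.

(* Finite-dimensional vector spaces over F are modelled by [vectType F];
   the dual space A^* is the space of linear forms 'Hom(A, F^o), and the
   pairing <a^*, x> is application a^* x. *)

Section Defs.
Variable F : fieldType.

Definition dual (A : vectType F) := 'Hom(A, F^o).

Definition bilinear_op (U V W : lmodType F) (f : U -> V -> W) :=
  (forall a x y z, f (a *: x + y) z = a *: f x z + f y z) /\
  (forall a x y z, f z (a *: x + y) = a *: f z x + f z y).

Definition bilinear_form (U : lmodType F) (B : U -> U -> F) :=
  (forall a x y z, B (a *: x + y) z = a * B x z + B y z) /\
  (forall a x y z, B z (a *: x + y) = a * B z x + B z y).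

Definition lie_bracket (L : lmodType F) (br : L -> L -> L) :=
  [/\ bilinear_op br,
      (forall x, br x x = 0) &
      (forall x y z, br x (br y z) + br y (br z x) + br z (br x y) = 0)].

Definition commutator (A : lmodType F) (circ : A -> A -> A) x y :=
  circ x y - circ y x.

Definition anti_pre_Lie (A : lmodType F) (circ : A -> A -> A) :=
  [/\ bilinear_op circ,
      (forall x y z, circ x (circ y z) - circ y (circ x z)
                     = circ (commutator circ y x) z) &
      (forall x y z, circ (commutator circ x y) z + circ (commutator circ y z) x
                     + circ (commutator circ z x) y = 0)].

Definition representation (L V : lmodType F) (br : L -> L -> L)
    (rho : L -> V -> V) :=
  [/\ bilinear_op rho &
      (forall x y v, rho (br x y) v = rho x (rho y v) - rho y (rho x v))].

Definition semidirect (L V : lmodType F) (br : L -> L -> L)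
    (rho : L -> V -> V) (p q : L * V) : L * V :=
  (br p.1 q.1, rho p.1 q.2 - rho q.1 p.2).

Definition comm_2cocycle (L : lmodType F) (br : L -> L -> L) (B : L -> L -> F) :=
  [/\ bilinear_form B,
      (forall x y, B x y = B y x) &
      (forall x y z, B (br x y) z + B (br y z) x + B (br z x) y = 0)].

Definition nondegenerate_form (L : lmodType F) (B : L -> L -> F) :=
  forall x, (forall y, B x y = 0) -> x = 0.

(* minus the dual of L_circ: <(negLdual x) a, y> = <a, x o y> *)
Definition negLdual (A : vectType F) (circ : A -> A -> A) (x : A)
    (a : dual A) : dual A :=
  linfun (fun y : A => a (circ x y)).

Definition pairing_form (A : vectType F) (p q : A * dual A) : F :=
  (q.2 p.1 : F) + (p.2 q.1 : F).

End Defs.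

(* Main.v *)
Require Import Defs.
From HB Require Import structures.
From mathcomp Require Import all_boot all_order all_algebra.
From mathcomp Require Import ring.
From Stdlib Require Import FunctionalExtensionality.
Import GRing.Theory.
Local Open Scope ring_scope.

Set Implicit Arguments. Unset Strict Implicit.
Section H.
Variable F : fieldType.

Lemma linfunE' (aT rT : vectType F) (f : aT -> rT) :
  (forall k u v, f (k *: u + v) = k *: f u + f v) -> forall v, linfun f v = f v.
Proof.
move=> H v.
pose ff : {linear aT -> rT} :=
  HB.pack f (GRing.isSemilinear.Build F aT rT _ f (GRing.semilinear_linear H)).
exact: (lfunE ff v).
Qed.

Lemma two_neq0 (char0 : [pchar F] =i pred0) : (2%:R : F) != 0.
Proof.
have := char0 2; rewrite !inE /=.
by case: (2%:R == 0 :> F).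
Qed.

Lemma dual_sep (A : vectType F) (u : A) : (forall a : dual A, a u = 0) -> u = 0.
Proof.
move=> H; rewrite (coord_vbasis (memvf u)); apply: big1 => i _.
have := H (linfun (coord (vbasis fullv) i : A -> F^o)).
have E : linfun (coord (vbasis fullv) i : A -> F^o) u = coord (vbasis fullv) i u.
  by apply: linfunE' => k x y; rewrite linearP.
by rewrite E => ->; rewrite scale0r.
Qed.

Lemma dual_ext (A : vectType F) (u v : A) : (forall a : dual A, a u = a v) -> u = v.
Proof.
move=> H; apply/eqP; rewrite -subr_eq0; apply/eqP/dual_sep => a.
by rewrite raddfB /= H subrr.
Qed.

Definition recon (A : vectType F) (g : dual A -> F) : A :=
  \sum_(i < \dim (fullv : {vspace A}))
     g (linfun (coord (vbasis fullv) i : A -> F^o)) *: (vbasis fullv)`_i.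

Lemma recon_spec (A : vectType F) (g : dual A -> F) :
  (forall k a b, g (k *: a + b) = k * g a + g b) ->
  forall a : dual A, a (recon g) = g a.
Proof.
move=> Hg a.
set gg : {linear dual A -> F^o} :=
  HB.pack (g : dual A -> F^o) (GRing.isSemilinear.Build F (dual A) F^o _ g
     (GRing.semilinear_linear Hg)).
have ea : a = \sum_(i < \dim (fullv : {vspace A}))
     (a (vbasis fullv)`_i) *: (linfun (coord (vbasis fullv) i : A -> F^o)).
  apply/lfunP => v; rewrite sum_lfunE {1}(coord_vbasis (memvf v)) linear_sum.
  apply: eq_bigr => i _; rewrite scale_lfunE linfunE'; last first.
    by move=> k x y; rewrite linearP.
  by rewrite linearZ /= /GRing.scale /= mulrC.
rewrite /recon linear_sum.
have -> : g a = gg a by [].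
rewrite {2}ea linear_sum; apply: eq_bigr => i _.
rewrite [RHS]linearZ [LHS]linearZ /=.
by rewrite /GRing.scale /= mulrC.
Qed.

Lemma bil0r (U V W : lmodType F) (f : U -> V -> W) : bilinear_op f ->
  forall z, f z 0 = 0.
Proof.
move=> [_ H] z; have := H 1 0 0 z; rewrite !scale1r addr0 => h.
by apply: (addrI (f z 0)); rewrite addr0 -h.
Qed.
Lemma bil0l (U V W : lmodType F) (f : U -> V -> W) : bilinear_op f ->
  forall z, f 0 z = 0.
Proof.
move=> [H _] z; have := H 1 0 0 z; rewrite !scale1r addr0 => h.
by apply: (addrI (f 0 z)); rewrite addr0 -h.
Qed.
Lemma bilDr (U V W : lmodType F) (f : U -> V -> W) : bilinear_op f ->
  forall z u v, f z (u + v) = f z u + f z v.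
Proof. by move=> [_ H] z u v; have := H 1 u v z; rewrite !scale1r. Qed.
Lemma bilDl (U V W : lmodType F) (f : U -> V -> W) : bilinear_op f ->
  forall z u v, f (u + v) z = f u z + f v z.
Proof. by move=> [H _] z u v; have := H 1 u v z; rewrite !scale1r. Qed.
Lemma bilBr (U V W : lmodType F) (f : U -> V -> W) : bilinear_op f ->
  forall z u v, f z (u - v) = f z u - f z v.
Proof.
move=> [H1 H] z u v; rewrite addrC -scaleN1r H scaleN1r addrC //.
Qed.
Lemma bilBl (U V W : lmodType F) (f : U -> V -> W) : bilinear_op f ->
  forall z u v, f (u - v) z = f u z - f v z.
Proof.
move=> [H H1] z u v; rewrite addrC -scaleN1r H scaleN1r addrC //.
Qed.

Lemma dualP (A : vectType F) (a : dual A) k x y : a (k *: x + y) = k * a x + a y.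
Proof. by rewrite linearP. Qed.
Lemma dualB (A : vectType F) (a : dual A) x y : a (x - y) = a x - a y.
Proof. by rewrite raddfB. Qed.
Lemma dualD (A : vectType F) (a : dual A) x y : a (x + y) = a x + a y.
Proof. by rewrite raddfD. Qed.
Lemma dualN (A : vectType F) (a : dual A) x : a (- x) = - a x.
Proof. by rewrite raddfN. Qed.
Lemma dual0 (A : vectType F) (a : dual A) : a 0 = 0.
Proof. by rewrite raddf0. Qed.
Lemma lfPE (A : vectType F) (a b : dual A) k y : (k *: a + b) y = k * a y + b y.
Proof. by rewrite add_lfunE scale_lfunE. Qed.
Lemma lfBE (A : vectType F) (a b : dual A) y : (a - b) y = a y - b y.
Proof. by rewrite add_lfunE opp_lfunE. Qed.
Lemma lf0E (A : vectType F) y : (0 : dual A) y = 0.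
Proof. by rewrite zero_lfunE. Qed.
Lemma negLE (A : vectType F) (circ : A -> A -> A) : bilinear_op circ ->
  forall x (a : dual A) y, negLdual circ x a y = a (circ x y).
Proof.
move=> Hb x a y; rewrite /negLdual linfunE' // => k u v.
by rewrite Hb.2 linearP.
Qed.

Lemma auxF (p q r : F) : p - q - r = -(r + q - p).
Proof. ring. Qed.

End H.

Theorem proposition2p26 (F : fieldType) (char0 : [pchar F] =i pred0)
    (A : vectType F) :
  (forall circ : A -> A -> A,
     anti_pre_Lie circ ->
     comm_2cocycle (semidirect (commutator circ) (negLdual circ))
                   (@pairing_form F A)
     /\ nondegenerate_form (@pairing_form F A)) /\
  (forall (br : A -> A -> A) (rho : A -> dual A -> dual A),
     lie_bracket br ->
     representation br rho ->
     comm_2cocycle (semidirect br rho) (@pairing_form F A) ->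
     exists circ : A -> A -> A,
       [/\ anti_pre_Lie circ,
           (forall x y, circ x y - circ y x = br x y) &
           (forall x, rho x = negLdual circ x)]).
Proof.
split.
  move=> circ [Hb Hi Hii]; split.
    split.
    - split => k [x a] [x' a'] [y b]; rewrite /pairing_form /=.
      rewrite !dualP !lfPE; ring.
      rewrite !dualP !lfPE; ring.
    - by move=> p q; rewrite /pairing_form addrC.
    - move=> [x a] [y b] [z c]; rewrite /pairing_form /semidirect /=.
      rewrite !lfBE !negLE // /commutator !dualB; ring.
  move=> [x a] H.
  have ha : a = 0.
    apply/lfunP => y; have := H (y, 0); rewrite /pairing_form /= lf0E add0r => ->.
    by rewrite lf0E.
  have hx : x = 0.
    apply: dual_sep => b; have := H (0, b); rewrite /pairing_form /= dual0 addr0.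
    by [].
  by rewrite ha hx.
move=> br rho [Hbr _ Hjac] [Hrho Hrep] [_ _ Hcoc].
pose circ x y := recon (fun a : dual A => rho x a y).
have circE : forall x y (a : dual A), a (circ x y) = rho x a y.
  move=> x y a; apply: recon_spec => k b c; by rewrite Hrho.2 lfPE.
have comp : forall x y, circ x y - circ y x = br x y.
  move=> x y; apply: dual_ext => a; rewrite dualB !circE.
  have := Hcoc (x, 0) (y, 0) (0, a); rewrite /pairing_form /semidirect /=.
  rewrite !(bil0r Hrho) ?(bil0l Hrho) ?lf0E ?lfBE ?lf0E ?dual0.
  rewrite ?(subrr, subr0, add0r, sub0r, addr0) => h.
  apply/eqP; rewrite -subr_eq0; apply/eqP; rewrite -oppr0 -h; exact: auxF.
have Hcb : bilinear_op circ.
  split => k u v w; apply: dual_ext => a.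
    by rewrite dualP !circE Hrho.1 lfPE.
  by rewrite dualP !circE dualP.
have Ieq : forall x y z, circ x (circ y z) - circ y (circ x z)
                     = circ (commutator circ y x) z.
  move=> x y z; apply: dual_ext => a; rewrite dualB !circE.
  have -> : commutator circ y x = br y x by exact: comp.
  by rewrite Hrep lfBE.
exists circ; split => //.
  split => //.
  move=> x y z.
  have Ieq' : forall u v w, circ (circ u v - circ v u) w
                            = circ v (circ u w) - circ u (circ v w).
    by move=> u v w; rewrite -Ieq.
  have J := Hjac x y z.
  rewrite -!comp !(bilBr Hcb) !Ieq' in J.
  rewrite /commutator !Ieq'.
  apply: dual_sep => a.
  have hJ := congr1 a J.
  rewrite !(dualD, dualB, dualN, opprB, opprK, dual0) in hJ.
  rewrite !(dualD, dualB, dualN, opprB, opprK).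
  apply: (mulfI (two_neq0 char0)); rewrite mulr0 -oppr0 -hJ; ring.
move=> x; apply: functional_extensionality => a; apply/lfunP => y.
by rewrite negLE // circE.
Qed.
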